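(* Let $q$ be a prime power, $t>1$ an integer, and $\Gamma_1,\ldots,\Gamma_t$ pairwise disjoint projective bundles of conics in $\mathrm{PG}(2,q)$. Let $A$ be the binary point-line incidence matrix of $\mathrm{PG}(2,q)$ and $B_i$ the binary point-conic incidence matrix of $\Gamma_i$ (rows indexed by the points in the same order), and let $H_{q,t}=(A\mid B_1\mid\cdots\mid B_t)$. Then the maximum column intersection of $H_{q,t}$ is at most $4$. Consequently, one round of the bit-flipping decoding algorithm with respect to $H_{q,t}$ corrects every error of Hamming weight at most $\lfloor\frac{q+1}{8}\rfloor$ in the code $C=\ker(H_{q,t})=\{c: cH_{q,t}^\top=0\}$; that is, for every $c\in C$ and $e$ with $\mathrm{wt}(e)\le\lfloor\frac{q+1}{8}\rfloor$, one round applied to $c+e$ outputs $c$.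
   Context: $\mathrm{PG}(2,q)$ is the projective plane whose points and lines are the 1- and 2-dimensional subspaces of $\mathbb{F}_q^3$. A (non-degenerate) conic is the set of points of $\mathrm{PG}(2,q)$ satisfying an irreducible homogeneous quadratic equation; it has $q+1$ points and meets every line in at most two points. A projective bundle of conics is a collection of $q^2+q+1$ conics any two of which meet in exactly one point; two bundles are disjoint if they share no conic. The maximum column intersection of a binary matrix is the maximum, over pairs of distinct columns, of the number of rows in which both columns have a $1$. $H_{q,t}$ has constant column weight $v=q+1$. One round of the bit-flipping algorithm on input $y$ for a binary matrix $H$ of constant column weight $v$: compute $s=Hy^\top$; for each column $j$ let $u_j$ be the number of rows $i$ with $H_{ij}=1$ and $s_i=1$; output $y$ with the bits in positions $\{j: u_j>v/2\}$ flipped. *)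

(* Defs.v *)
From HB Require Import structures.
From mathcomp Require Import all_boot all_order all_algebra all_field.
Set Implicit Arguments. Unset Strict Implicit. Unset Printing Implicit Defensive.
Import GRing.Theory.
Local Open Scope ring_scope.

(* ---------- The projective plane PG(2,q) over a finite field F, q = #|F| ----
   Subspaces of F^3 (row vectors) are represented canonically by square
   matrices M with <<M>>%MS = M (mxalgebra's canonical generator). *)

Definition Point (F : finFieldType) :=
  {M : 'M[F]_3 | (<<M>>%MS == M) && (\rank M == 1%N)}.
Definition Line (F : finFieldType) :=
  {M : 'M[F]_3 | (<<M>>%MS == M) && (\rank M == 2%N)}.

Definition incident (F : finFieldType) (p : Point F) (l : Line F) : bool :=
  (val p <= val l)%MS.

Definition line_pts (F : finFieldType) (l : Line F) : {set Point F} :=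
  [set p | incident p l].

Definition qeval (R : pzRingType) (a : 'M[R]_3) (x : 'rV[R]_3) : R :=
  \sum_(i < 3) \sum_(j < 3 | (i <= j)%N) a i j * x 0 i * x 0 j.

(* Q_a is absolutely irreducible: over no field extension L of F (given by a
   ring morphism f : F -> L) is Q_a a product of two linear forms
   (u.x)(w.x); written coefficientwise (polynomial equality). *)
Definition abs_irreducible (F : fieldType) (a : 'M[F]_3) : Prop :=
  forall (L : fieldType) (f : {rmorphism F -> L}) (u w : 'rV[L]_3),
    exists i j : 'I_3, ((i <= j)%N) &&
      (f (a i j) != (if i == j then u 0 i * w 0 i
                     else u 0 i * w 0 j + u 0 j * w 0 i)).

Definition zero_set (F : finFieldType) (a : 'M[F]_3) : {set Point F} :=
  [set p : Point F | [forall v : 'rV[F]_3, (v <= val p)%MS ==> (qeval a v == 0)]].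

Definition is_conic (F : finFieldType) (C : {set Point F}) : Prop :=
  exists a : 'M[F]_3, abs_irreducible a /\ C = zero_set a.

Definition projective_bundle (F : finFieldType) (G : {set {set Point F}}) : Prop :=
  [/\ forall C, C \in G -> is_conic C,
      #|G| = (#|F| ^ 2 + #|F| + 1)%N &
      forall C D, C \in G -> D \in G -> C != D -> #|C :&: D| = 1%N].

(* ---------- The matrix H_{q,t} = (A | B_1 | ... | B_t) ----------------------
   Columns are listed as point sets: first all lines, then the conics of
   Gamma_1, ..., Gamma_t. *)
Definition Hcols (F : finFieldType) (t : nat) (Gam : 'I_t -> {set {set Point F}})
  : seq {set Point F} :=
  [seq line_pts l | l <- enum {: Line F}] ++
  flatten [seq enum (Gam i) | i <- enum 'I_t].

Definition Hmx (F : finFieldType) (t : nat) (Gam : 'I_t -> {set {set Point F}})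
  : 'M['F_2]_(#|{: Point F}|, size (Hcols Gam)) :=
  \matrix_(i < #|{: Point F}|, j < size (Hcols Gam))
     ((enum_val i \in nth set0 (Hcols Gam) j) : nat)%:R.

Definition col_inter (m n : nat) (H : 'M['F_2]_(m, n)) (j k : 'I_n) : nat :=
  #|[set i : 'I_m | (H i j == 1) && (H i k == 1)]|.

Definition max_col_inter (m n : nat) (H : 'M['F_2]_(m, n)) : nat :=
  \max_(j < n) \max_(k < n | k != j) col_inter H j k.

Definition wt (n : nat) (y : 'rV['F_2]_n) : nat := #|[set j : 'I_n | y 0 j != 0]|.

Definition in_code (m n : nat) (H : 'M['F_2]_(m, n)) (c : 'rV['F_2]_n) : bool :=
  c *m H^T == 0.

Definition bitflip (m n : nat) (H : 'M['F_2]_(m, n)) (v : nat) (y : 'rV['F_2]_n)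
  : 'rV['F_2]_n :=
  let s := H *m y^T in
  let u := fun j : 'I_n => #|[set i : 'I_m | (H i j == 1) && (s i 0 == 1)]| in
  \row_j (y 0 j + (if (v < 2 * u j)%N then 1 else 0)).

(* Main.v *)
Require Import Defs.
From HB Require Import structures.
From mathcomp Require Import all_boot all_order all_algebra all_field.
From mathcomp Require Import ring zify.
Set Implicit Arguments. Unset Strict Implicit. Unset Printing Implicit Defensive.
Import GRing.Theory.
Local Open Scope ring_scope.

Section Gen.
Variable R : comNzRingType.
Implicit Types (a b : 'M[R]_3) (x y v w : 'rV[R]_3) (k s t mu : R).

Definition i0 : 'I_3 := @Ordinal 3 0 isT.
Definition i1 : 'I_3 := @Ordinal 3 1 isT.
Definition i2 : 'I_3 := @Ordinal 3 2 isT.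

Lemma qevalE (a : 'M[R]_3) x : qeval a x =
  a i0 i0 * x 0 i0 * x 0 i0 + a i0 i1 * x 0 i0 * x 0 i1 + a i0 i2 * x 0 i0 * x 0 i2
  + a i1 i1 * x 0 i1 * x 0 i1 + a i1 i2 * x 0 i1 * x 0 i2 + a i2 i2 * x 0 i2 * x 0 i2.
Proof.
rewrite /qeval !big_ord_recl !big_ord0 !big_mkcond !big_ord_recl !big_ord0 /=.
rewrite big_mkcond !big_ord_recl big_ord0 /=.
have -> : lift ord0 ord0 = i1 by apply/val_inj.
have -> : lift ord0 (lift ord0 ord0) = i2 by apply/val_inj.
have -> : (ord0 : 'I_3) = i0 by apply/val_inj.
rewrite /=. ring.
Qed.

Definition bil (a : 'M[R]_3) x y := qeval a (x + y) - qeval a x - qeval a y.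

Definition r3 (c0 c1 c2 : R) : 'rV[R]_3 :=
  \row_(k < 3) (if k == i0 then c0 else if k == i1 then c1 else c2).

Lemma r3E c0 c1 c2 : ((r3 c0 c1 c2) 0 i0 = c0) * ((r3 c0 c1 c2) 0 i1 = c1) * ((r3 c0 c1 c2) 0 i2 = c2).
Proof. by rewrite !mxE. Qed.

Definition dot (x u : 'rV[R]_3) := x 0 i0 * u 0 i0 + x 0 i1 * u 0 i1 + x 0 i2 * u 0 i2.

Lemma dotE (x u : 'rV[R]_3) : (x *m u^T) 0 0 = dot x u.
Proof.
rewrite !mxE !big_ord_recl big_ord0 /dot !mxE.
have -> : lift ord0 ord0 = i1 by apply/val_inj.
have -> : lift ord0 (lift ord0 ord0) = i2 by apply/val_inj.
have -> : (ord0 : 'I_3) = i0 by apply/val_inj.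
by rewrite addr0 addrA.
Qed.

Definition mx3 (b0 b1 b2 : 'rV[R]_3) : 'M[R]_3 :=
  \matrix_(i, j) (if i == i0 then b0 0 j else if i == i1 then b1 0 j else b2 0 j).

Lemma mx3E (b0 b1 b2 x : 'rV[R]_3) :
  x *m mx3 b0 b1 b2 = x 0 i0 *: b0 + x 0 i1 *: b1 + x 0 i2 *: b2.
Proof.
apply/rowP => j; rewrite !mxE !big_ord_recl big_ord0 !mxE.
have -> : lift ord0 ord0 = i1 by apply/val_inj.
have -> : lift ord0 (lift ord0 ord0) = i2 by apply/val_inj.
have -> : (ord0 : 'I_3) = i0 by apply/val_inj.
by rewrite /= addr0 addrA.
Qed.

Lemma qevalZ a k x : qeval a (k *: x) = k ^+ 2 * qeval a x.
Proof. rewrite !qevalE !mxE; ring. Qed.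

Lemma qeval_comb2 a s t x y :
  qeval a (s *: x + t *: y) = s ^+ 2 * qeval a x + s * t * bil a x y + t ^+ 2 * qeval a y.
Proof. rewrite /bil !qevalE !mxE; ring. Qed.

Lemma qeval_comb3 a (x0 x1 x2 : R) (b0 b1 b2 : 'rV[R]_3) :
  qeval a (x0 *: b0 + x1 *: b1 + x2 *: b2) =
  x0 ^+ 2 * qeval a b0 + x1 ^+ 2 * qeval a b1 + x2 ^+ 2 * qeval a b2
  + x0 * x1 * bil a b0 b1 + x0 * x2 * bil a b0 b2 + x1 * x2 * bil a b1 b2.
Proof. rewrite /bil !qevalE !mxE; ring. Qed.

Lemma bilC a x y : bil a x y = bil a y x.
Proof. rewrite /bil (addrC x y); ring. Qed.

Lemma bil_lin a v s t x y : bil a v (s *: x + t *: y) = s * bil a v x + t * bil a v y.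
Proof. rewrite /bil !qevalE !mxE; ring. Qed.

Lemma bil_self a v : bil a v v = 2%:R * qeval a v.
Proof. rewrite /bil !qevalE !mxE; ring. Qed.

Lemma qeval_lin a b (mu : R) x : qeval (a - mu *: b) x = qeval a x - mu * qeval b x.
Proof. rewrite !qevalE !mxE; ring. Qed.

Lemma bil_lin_a a b (mu : R) x y : bil (a - mu *: b) x y = bil a x y - mu * bil b x y.
Proof. rewrite /bil !qeval_lin; ring. Qed.

End Gen.

Lemma qeval_map (F L : fieldType) (f : {rmorphism F -> L}) (a : 'M[F]_3) v :
  qeval (map_mx f a) (map_mx f v) = f (qeval a v).
Proof. by rewrite !qevalE !mxE !rmorphD !rmorphM. Qed.

Lemma bil_map (F L : fieldType) (f : {rmorphism F -> L}) (a : 'M[F]_3) v w :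
  bil (map_mx f a) (map_mx f v) (map_mx f w) = f (bil a v w).
Proof. by rewrite /bil -raddfD /= !qeval_map -!rmorphB. Qed.


Lemma ord3 (i : 'I_3) : [\/ i = i0, i = i1 | i = i2].
Proof.
case: i => [[|[|[|//]]] Hi].
- by apply: Or31; apply/val_inj.
- by apply: Or32; apply/val_inj.
- by apply: Or33; apply/val_inj.
Qed.

Lemma coef_zero (R : comNzRingType) (c00 c01 c02 c11 c12 c22 : R) :
  (forall z0 z1 z2 : R, c00*z0*z0 + c01*z0*z1 + c02*z0*z2 + c11*z1*z1 + c12*z1*z2 + c22*z2*z2 = 0) ->
  c00 = 0 /\ c01 = 0 /\ c02 = 0 /\ c11 = 0 /\ c12 = 0 /\ c22 = 0.
Proof.
move=> H.
have h00 := H 1 0 0; have h11 := H 0 1 0; have h22 := H 0 0 1.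
have h01 := H 1 1 0; have h02 := H 1 0 1; have h12 := H 0 1 1.
rewrite !(mul1r, mulr1, mul0r, mulr0, addr0, add0r) in h00 h11 h22 h01 h02 h12.
rewrite h00 h11 add0r addr0 in h01.
rewrite h00 h22 add0r addr0 in h02.
rewrite h11 h22 add0r addr0 in h12.
by [].
Qed.

Lemma indep_unit (L : fieldType) (M : 'M[L]_3) :
  (forall x : 'rV[L]_3, x *m M = 0 -> x = 0) -> M \in unitmx.
Proof.
move=> H; rewrite -row_free_unit -kermx_eq0; apply/eqP/row_matrixP => i.
rewrite row0; apply: H; apply/sub_kermxP; exact: row_sub.
Qed.

Lemma red_contra (F L : fieldType) (f : {rmorphism F -> L}) (a : 'M[F]_3)
   (M : 'M[L]_3) (al be : 'rV[L]_3) :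
  abs_irreducible a -> M \in unitmx ->
  (forall x, qeval (map_mx f a) (x *m M) = dot x al * dot x be) -> False.
Proof.
move=> abs uM H.
pose u := (invmx M *m al^T)^T; pose w := (invmx M *m be^T)^T.
have key z : qeval (map_mx f a) z = dot z u * dot z w.
  have := H (z *m invmx M); rewrite mulmxKV // => ->.
  by rewrite -!dotE !trmxK !mulmxA.
clearbody u w.
have [i [j /andP [le ne]]] := abs L f u w.
pose c (i j : 'I_3) := f (a i j) - (if i == j then u 0 i * w 0 i else u 0 i * w 0 j + u 0 j * w 0 i).
have [] := @coef_zero L (c i0 i0) (c i0 i1) (c i0 i2) (c i1 i1) (c i1 i2) (c i2 i2).
  move=> z0 z1 z2; have k := key (r3 z0 z1 z2).
  move: k; rewrite qevalE /dot !r3E !mxE => /eqP; rewrite -subr_eq0 => /eqP k.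
  have n01 : (i0 == i1) = false by [].
  have n02 : (i0 == i2) = false by [].
  have n12 : (i1 == i2) = false by [].
  rewrite -k /c !eqxx n01 n02 n12; ring.
move=> c00 [c01 [c02 [c11 [c12 c22]]]].
move: ne; rewrite -subr_eq0.
by case: (ord3 i) le => -> le; case: (ord3 j) le => -> le //= /eqP; apply.
Qed.


Section Pts.
Variable F : finFieldType.
Implicit Types (v w : 'rV[F]_3) (a : 'M[F]_3).

Lemma rank_row v : v != 0 -> \rank v = 1%N.
Proof. by move=> nz; apply/eqP; rewrite eqn_leq rank_leq_row lt0n mxrank_eq0. Qed.

Lemma c1_ne0 : (const_mx 1 : 'rV[F]_3) != 0.
Proof. by apply/eqP => /rowP /(_ i0); rewrite !mxE; apply/eqP; exact: oner_neq0. Qed.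

Lemma pt_prop v : v != 0 -> (<< <<v>>%MS >>%MS == <<v>>%MS) && (\rank <<v>>%MS == 1%N).
Proof. by move=> nz; rewrite genmx_id eqxx mxrank_gen rank_row. Qed.

Definition pt0 : Point F := exist _ (<<const_mx 1>>%MS) (pt_prop c1_ne0).
Definition ptv v : Point F := insubd pt0 (<<v>>%MS).

Lemma ptvE v : v != 0 -> val (ptv v) = <<v>>%MS.
Proof. by move=> nz; rewrite /ptv insubdK //; exact: pt_prop. Qed.

Lemma sub_pt v w : v != 0 -> (w <= val (ptv v))%MS = (w <= v)%MS.
Proof. by move=> nz; rewrite ptvE // genmxE. Qed.

Lemma pt_repr (p : Point F) : exists2 v, v != 0 & p = ptv v.
Proof.
have /andP [/eqP Hg /eqP Hr] := valP p.
set M := val p in Hg Hr.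
have [i Hi] : exists i, row i M != 0.
  case: (pickP (fun i => row i M != 0)) => [i Hi|H]; first by exists i.
  suff M0 : M = 0 by move: Hr; rewrite M0 mxrank0.
  by apply/row_matrixP => i; rewrite row0; apply/eqP; move: (H i) => /= /negbFE.
exists (row i M) => //; apply: val_inj; rewrite ptvE // -/M; symmetry; transitivity (<<M>>%MS); last exact: Hg.
apply: eq_genmx; apply/eqmxP.
by rewrite -(mxrank_leqif_eq (row_sub i M)).2 Hr rank_row.
Qed.

Lemma ptv_eq v w : v != 0 -> w != 0 -> (ptv v == ptv w) = (v <= w)%MS.
Proof.
move=> nv nw; rewrite -val_eqE !ptvE //.
apply/eqP/idP => [E|vw].
  by rewrite -(genmxE v) E genmxE submx_refl.
apply: eq_genmx; apply/eqmxP.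
by rewrite -(mxrank_leqif_eq vw).2 !rank_row.
Qed.

Lemma mem_zero v a : v != 0 -> (ptv v \in zero_set a) = (qeval a v == 0).
Proof.
move=> nz; rewrite inE; apply/forallP/idP => [H|/eqP H w].
  by have := H v; rewrite sub_pt // submx_refl.
apply/implyP; rewrite sub_pt // => /sub_rVP [k ->].
by rewrite qevalZ H mulr0.
Qed.

Lemma inc_pt v (l : Line F) : v != 0 -> (ptv v \in line_pts l) = (v <= val l)%MS.
Proof. by move=> nz; rewrite inE /incident ptvE // genmxE. Qed.

Lemma comb_sub v w (x y : F) : ((x *: v + y *: w)%R <= (v + w))%MS.
Proof. by apply: addmx_sub_adds; apply: scalemx_sub; rewrite submx_refl. Qed.

Definition indep2 v w := forall x y : F, x *: v + y *: w = 0 -> x = 0 /\ y = 0.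

Lemma indep2_of v w : v != 0 -> ~~ (w <= v)%MS -> indep2 v w.
Proof.
move=> nv nwv x y E.
have y0 : y = 0.
  apply/eqP; apply: contraNT nwv => ny.
  have -> : w = (- (x / y)) *: v.
    apply/rowP => j; have := congr1 (fun z : 'rV_3 => z 0 j) E.
    rewrite !mxE => E'; apply: (mulfI ny).
    have -> : y * (- (x / y) * v 0 j) = - (y / y) * (x * v 0 j) by ring.
    by rewrite divff // mulN1r; apply/eqP; rewrite -addr_eq0 addrC E'.
  by apply: scalemx_sub; rewrite submx_refl.
split=> //; move: E; rewrite y0 scale0r addr0 => /eqP.
by rewrite scaler_eq0 (negbTE nv) orbF => /eqP.
Qed.

Lemma indep2_eq v w (x y x' y' : F) : indep2 v w ->
  x *: v + y *: w = x' *: v + y' *: w -> x = x' /\ y = y'.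
Proof.
move=> I E; have [h1 h2] : x - x' = 0 /\ y - y' = 0.
  apply: I; apply/rowP => j; have := congr1 (fun z : 'rV_3 => z 0 j) E.
  rewrite !mxE => E'.
  have -> : (x - x') * v 0 j + (y - y') * w 0 j = (x * v 0 j + y * w 0 j) - (x' * v 0 j + y' * w 0 j) by ring.
  by rewrite E' subrr.
by split; apply/eqP; rewrite -subr_eq0 ?h1 ?h2.
Qed.

Definition indep3 (b0 b1 b2 : 'rV[F]_3) := forall x0 x1 x2 : F,
  x0 *: b0 + x1 *: b1 + x2 *: b2 = 0 -> [/\ x0 = 0, x1 = 0 & x2 = 0].

Lemma indep3_of v w b : indep2 v w -> ~~ (b <= v + w)%MS -> indep3 v w b.
Proof.
move=> I nb x0 x1 x2 E.
have z2 : x2 = 0.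
  apply/eqP; apply: contraNT nb => ny.
  have -> : b = (- (x0 / x2)) *: v + (- (x1 / x2)) *: w.
    apply/rowP => j; have := congr1 (fun z : 'rV_3 => z 0 j) E.
    rewrite !mxE => E'; apply: (mulfI ny).
    have -> : x2 * (- (x0 / x2) * v 0 j + - (x1 / x2) * w 0 j) = 
       - (x2 / x2) * (x0 * v 0 j + x1 * w 0 j) by ring.
    rewrite divff // mulN1r; apply/eqP; rewrite -addr_eq0 addrC.
    by rewrite E'.
  exact: comb_sub.
by move: E; rewrite z2 scale0r addr0 => /I [-> ->].
Qed.

Lemma indep3_eq b0 b1 b2 (x0 x1 x2 y0 y1 y2 : F) : indep3 b0 b1 b2 ->
  x0 *: b0 + x1 *: b1 + x2 *: b2 = y0 *: b0 + y1 *: b1 + y2 *: b2 ->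
  [/\ x0 = y0, x1 = y1 & x2 = y2].
Proof.
move=> I E; have [h0 h1 h2] : [/\ x0 - y0 = 0, x1 - y1 = 0 & x2 - y2 = 0].
  apply: I; apply/rowP => j; have := congr1 (fun z : 'rV_3 => z 0 j) E.
  rewrite !mxE => E'.
  have -> : (x0 - y0) * b0 0 j + (x1 - y1) * b1 0 j + (x2 - y2) * b2 0 j =
     (x0 * b0 0 j + x1 * b1 0 j + x2 * b2 0 j) - (y0 * b0 0 j + y1 * b1 0 j + y2 * b2 0 j) by ring.
  by rewrite E' subrr.
by split; apply/eqP; rewrite -subr_eq0 ?h0 ?h1 ?h2.
Qed.

Lemma indep3_unit b0 b1 b2 : indep3 b0 b1 b2 -> mx3 b0 b1 b2 \in unitmx.
Proof.
move=> I; apply: indep_unit => x; rewrite mx3E => /I [h0 h1 h2].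
by apply/rowP => j; case: (ord3 j) => ->; rewrite mxE.
Qed.

Lemma span3 b0 b1 b2 : indep3 b0 b1 b2 -> forall z : 'rV[F]_3,
  exists x0 x1 x2, z = x0 *: b0 + x1 *: b1 + x2 *: b2.
Proof.
move=> I z; have U := indep3_unit I.
set X := z *m invmx (mx3 b0 b1 b2).
exists (X 0 i0); exists (X 0 i1); exists (X 0 i2).
by rewrite -mx3E /X mulmxKV.
Qed.

End Pts.


Section Geo.
Variable F : finFieldType.
Implicit Types (v w : 'rV[F]_3) (a : 'M[F]_3).

Lemma exists_out m (W : 'M[F]_(m, 3)) : (\rank W < 3)%N -> exists i, ~~ ((delta_mx 0 i : 'rV[F]_3) <= W)%MS.
Proof.
move=> r; case: (pickP (fun i : 'I_3 => ~~ ((delta_mx 0 i : 'rV[F]_3) <= W)%MS)) => [i Hi|H]; first by exists i.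
have : (1%:M <= W)%MS.
  by apply/row_subP => i; rewrite row1; move: (H i) => /= /negbFE.
by move/mxrankS; rewrite mxrank1 leqNgt r.
Qed.

Lemma rank_adds2 v w : v != 0 -> ~~ (w <= v)%MS -> \rank (v + w)%MS = 2%N.
Proof.
move=> nv nw; apply/eqP; rewrite eqn_leq; apply/andP; split.
  apply: leq_trans (mxrank_adds_leqif v w).1 _.
  by rewrite rank_row // -[2%N]/(1 + 1)%N leq_add2l rank_leq_row.
have h : (\rank v < \rank (v + w)%MS)%N.
  apply: rank_ltmx; rewrite ltmxE addsmxSl /=.
  by apply: contra nw => h; apply: submx_trans h; exact: addsmxSr.
by rewrite rank_row in h.
Qed.

Definition idrm : {rmorphism F -> F} := @idfun F.
Lemma map_idrm m n (A : 'M[F]_(m, n)) : map_mx idrm A = A.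
Proof. by apply/matrixP => i j; rewrite mxE. Qed.

Lemma bil_ne0 a v w : abs_irreducible a -> v != 0 -> ~~ (w <= v)%MS ->
  qeval a v = 0 -> qeval a w = 0 -> bil a v w != 0.
Proof.
move=> abs nv nw Qv Qw; apply/negP => /eqP B.
have I2 := indep2_of nv nw.
have rk : (\rank (v + w)%MS < 3)%N by rewrite rank_adds2.
have [i Hi] := exists_out rk.
set b := (delta_mx 0 i : 'rV[F]_3) in Hi.
have I3 := indep3_of I2 Hi.
apply: (@red_contra F F idrm a (mx3 v w b) (r3 0 0 1) (r3 (bil a v b) (bil a w b) (qeval a b)) abs).
  exact: indep3_unit.
move=> x; rewrite map_idrm mx3E qeval_comb3 Qv Qw B /dot !r3E; ring.
Qed.

Lemma nsub_sym v w : v != 0 -> w != 0 -> ~~ (v <= w)%MS -> ~~ (w <= v)%MS.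
Proof. by move=> nv nw; rewrite -!ptv_eq // eq_sym. Qed.

Lemma three_pts a v1 v2 v3 : abs_irreducible a ->
  v1 != 0 -> v2 != 0 -> v3 != 0 ->
  ~~ (v2 <= v1)%MS -> ~~ (v3 <= v1)%MS -> ~~ (v3 <= v2)%MS ->
  (v3 <= v1 + v2)%MS ->
  qeval a v1 = 0 -> qeval a v2 = 0 -> qeval a v3 = 0 -> False.
Proof.
move=> abs n1 n2 n3 s21 s31 s32 /sub_addsmxP [u E] Q1 Q2 Q3.
have /sub_rVP [x Ex] : (u.1 *m v1 <= v1)%MS by exact: submxMl.
have /sub_rVP [y Ey] : (u.2 *m v2 <= v2)%MS by exact: submxMl.
rewrite Ex Ey in E.
have nx : x != 0.
  apply: contraNneq s32 => x0; rewrite E x0 scale0r add0r.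
  by apply: scalemx_sub; rewrite submx_refl.
have ny : y != 0.
  apply: contraNneq s31 => y0; rewrite E y0 scale0r addr0.
  by apply: scalemx_sub; rewrite submx_refl.
have := bil_ne0 abs n1 s21 Q1 Q2.
move: Q3; rewrite E qeval_comb2 Q1 Q2 !mulr0 add0r addr0 => /eqP.
by rewrite !mulf_eq0 (negbTE nx) (negbTE ny) /= => ->.
Qed.

Lemma line_span (l : Line F) v w : v != 0 -> ~~ (w <= v)%MS ->
  (v <= val l)%MS -> (w <= val l)%MS -> (val l <= v + w)%MS.
Proof.
move=> nv nw sv sw.
have s : (v + w <= val l)%MS by rewrite addsmx_sub sv.
have /andP [_ /eqP r] := valP l.
by rewrite -(mxrank_leqif_sup s).2 rank_adds2 // r.
Qed.

Lemma line_conic (l : Line F) a : abs_irreducible a ->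
  (#|line_pts l :&: zero_set a| <= 2)%N.
Proof.
move=> abs; rewrite leqNgt; apply/negP => /card_gt2P [p1 [p2 [p3 [[h1 h2 h3] [d12 d23 d31]]]]].
have [v1 n1 E1] := pt_repr p1; have [v2 n2 E2] := pt_repr p2; have [v3 n3 E3] := pt_repr p3.
move: h1 h2 h3 d12 d23 d31; rewrite E1 E2 E3 !in_setI !inc_pt // !mem_zero // !ptv_eq //.
move=> /andP [l1 /eqP q1] /andP [l2 /eqP q2] /andP [l3 /eqP q3] d12 d23 d31.
have s21 : ~~ (v2 <= v1)%MS by exact: nsub_sym.
apply: (three_pts abs n1 n2 n3 s21 d31 (nsub_sym n2 n3 d23) _ q1 q2 q3).
apply: submx_trans l3 _; exact: line_span.
Qed.

Lemma line_line (l l' : Line F) : l != l' -> (#|line_pts l :&: line_pts l'| <= 1)%N.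
Proof.
move=> nl; rewrite leqNgt; apply/negP => /card_gt1P [p1 [p2 [h1 h2 d]]].
have [v1 n1 E1] := pt_repr p1; have [v2 n2 E2] := pt_repr p2.
move: h1 h2 d; rewrite E1 E2 !in_setI !inc_pt // ptv_eq //.
move=> /andP [a1 b1] /andP [a2 b2] d.
have s21 := nsub_sym n1 n2 d.
have e1 := line_span n1 s21 a1 a2; have e2 := line_span n1 s21 b1 b2.
move/negP: nl; apply; apply/eqP; apply: val_inj.
have /andP [/eqP g1 _] := valP l; have /andP [/eqP g2 _] := valP l'.
rewrite -g1 -g2; apply: eq_genmx; apply/eqmxP.
apply/andP; split.
  by apply: submx_trans e1 _; rewrite addsmx_sub b1.
by apply: submx_trans e2 _; rewrite addsmx_sub a1.
Qed.

Lemma inj_card (S : {set Point F}) (g : option F -> Point F) :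
  injective g -> (forall o, g o \in S) -> (#|F|.+1 <= #|S|)%N.
Proof.
move=> ginj gS; have := card_imset [set: option F] ginj.
rewrite cardsT card_option => <-; apply: subset_leq_card.
by apply/subsetP => _ /imsetP [o _ ->].
Qed.

Definition r1 (o : option F) : F := if o is Some _ then 1 else 0.
Definition r2 (o : option F) : F := if o is Some k then k else 1.

Lemma r12_ne0 o : ~ (r1 o = 0 /\ r2 o = 0).
Proof. by case: o => [k|] /= [] /eqP; rewrite ?oner_eq0 // => _ /eqP; rewrite oner_eq0. Qed.

Lemma r12_inj o o' (c : F) : r1 o = c * r1 o' -> r2 o = c * r2 o' -> o = o'.
Proof.
case: o => [k|]; case: o' => [k'|] //= h1 h2.
- by move: h1; rewrite mulr1 => h1; rewrite h2 -h1 mul1r.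
- by move: h1; rewrite mulr0 => /eqP; rewrite oner_eq0.
- by move: h1 h2; rewrite mulr1 => <-; rewrite mul0r => /eqP; rewrite oner_eq0.
Qed.

Lemma line_card (l : Line F) : (#|F|.+1 <= #|line_pts l|)%N.
Proof.
have /andP [_ /eqP r] := valP l.
have [i Hi] : exists i, row i (val l) != 0.
  case: (pickP (fun i => row i (val l) != 0)) => [i Hi|H]; first by exists i.
  suff M0 : val l = 0 by move: r; rewrite M0 mxrank0.
  by apply/row_matrixP => i; rewrite row0; apply/eqP; move: (H i) => /= /negbFE.
set v1 := row i (val l) in Hi.
have : ~~ (val l <= v1)%MS.
  by apply/negP => /mxrankS; rewrite r rank_row.
case/row_subPn => j Hj; set v2 := row j (val l) in Hj.
have I := indep2_of Hi Hj.
have nz o : r1 o *: v1 + r2 o *: v2 != 0.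
  by apply/eqP => /I [h1 h2]; apply: (@r12_ne0 o).
pose g o := ptv (r1 o *: v1 + r2 o *: v2).
apply: (@inj_card _ g).
  move=> o o' /eqP; rewrite /g ptv_eq // => /sub_rVP [c].
  rewrite scalerDr !scalerA => /(indep2_eq I) [h1 h2]; exact: r12_inj h1 h2.
move=> o; rewrite /g inc_pt //; apply: submx_trans (comb_sub _ _ _ _) _.
by rewrite addsmx_sub !row_sub.
Qed.

Lemma conic5 a1 a2 v1 v2 v3 v4 v5 :
  abs_irreducible a1 -> abs_irreducible a2 ->
  v1 != 0 -> v2 != 0 -> v3 != 0 -> v4 != 0 -> v5 != 0 ->
  ~~ (v2 <= v1)%MS -> ~~ (v3 <= v1)%MS -> ~~ (v3 <= v2)%MS ->
  ~~ (v4 <= v1)%MS -> ~~ (v4 <= v2)%MS -> ~~ (v4 <= v3)%MS ->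
  ~~ (v5 <= v1)%MS -> ~~ (v5 <= v2)%MS -> ~~ (v5 <= v3)%MS -> ~~ (v5 <= v4)%MS ->
  qeval a1 v1 = 0 -> qeval a1 v2 = 0 -> qeval a1 v3 = 0 -> qeval a1 v4 = 0 -> qeval a1 v5 = 0 ->
  qeval a2 v1 = 0 -> qeval a2 v2 = 0 -> qeval a2 v3 = 0 -> qeval a2 v4 = 0 -> qeval a2 v5 = 0 ->
  forall z, (qeval a1 z == 0) = (qeval a2 z == 0).
Proof.
move=> abs1 abs2 n1 n2 n3 n4 n5 s21 s31 s32 s41 s42 s43 s51 s52 s53 s54
  p1 p2 p3 p4 p5 q1 q2 q3 q4 q5.
have I12 := indep2_of n1 s21.
have ns3 : ~~ (v3 <= v1 + v2)%MS.
  by apply/negP => h; exact: (three_pts abs1 n1 n2 n3 s21 s31 s32 h p1 p2 p3).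
have I3 := indep3_of I12 ns3.
have B2 := bil_ne0 abs2 n1 s21 q1 q2.
have B1 := bil_ne0 abs1 n1 s21 p1 p2.
set mu := bil a1 v1 v2 / bil a2 v1 v2.
have mu0 : mu != 0 by rewrite mulf_neq0 // invr_neq0.
set a := a1 - mu *: a2.
have Qa z : qeval a z = qeval a1 z - mu * qeval a2 z by rewrite qeval_lin.
have Z1 : qeval a v1 = 0 by rewrite Qa p1 q1 mulr0 subr0.
have Z2 : qeval a v2 = 0 by rewrite Qa p2 q2 mulr0 subr0.
have Z3 : qeval a v3 = 0 by rewrite Qa p3 q3 mulr0 subr0.
have Z4 : qeval a v4 = 0 by rewrite Qa p4 q4 mulr0 subr0.
have Z5 : qeval a v5 = 0 by rewrite Qa p5 q5 mulr0 subr0.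
have Z12 : bil a v1 v2 = 0 by rewrite bil_lin_a /mu divfK // subrr.
have expand x0 x1 x2 : qeval a (x0 *: v1 + x1 *: v2 + x2 *: v3) =
    x2 * (x0 * bil a v1 v3 + x1 * bil a v2 v3).
  by rewrite qeval_comb3 Z1 Z2 Z3 Z12; ring.
have [y0 [y1 [y2 E4]]] := span3 I3 v4.
have [z0 [z1 [z2 E5]]] := span3 I3 v5.
have y2n : y2 != 0.
  apply/negP => /eqP y20; apply: (three_pts abs1 n1 n2 n4 s21 s41 s42 _ p1 p2 p4).
  by rewrite E4 y20 scale0r addr0 comb_sub.
have z2n : z2 != 0.
  apply/negP => /eqP z20; apply: (three_pts abs1 n1 n2 n5 s21 s51 s52 _ p1 p2 p5).
  by rewrite E5 z20 scale0r addr0 comb_sub.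
set B13 := bil a v1 v3; set B23 := bil a v2 v3.
have ey : y0 * B13 + y1 * B23 = 0.
  by move: Z4; rewrite E4 expand => /eqP; rewrite mulf_eq0 (negbTE y2n) => /eqP.
have ez : z0 * B13 + z1 * B23 = 0.
  by move: Z5; rewrite E5 expand => /eqP; rewrite mulf_eq0 (negbTE z2n) => /eqP.
case: (boolP ((B13 == 0) && (B23 == 0))) => [/andP [/eqP b13 /eqP b23]|nb].
  move=> z; have [x0 [x1 [x2 Ez]]] := span3 I3 z.
  have : qeval a z = 0 by rewrite Ez expand -/B13 -/B23 b13 b23; ring.
  rewrite Qa => /eqP; rewrite subr_eq0 => /eqP ->.
  by rewrite mulf_eq0 (negbTE mu0).
exfalso.
have D : y0 * z1 - y1 * z0 = 0.
  case: (boolP (B13 == 0)) nb => [/eqP b13|b13] /=.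
    move=> b23.
    have : B23 * (y0 * z1 - y1 * z0) = 0.
      have -> : B23 * (y0 * z1 - y1 * z0) = (z0 * B13 + z1 * B23) * y0 - (y0 * B13 + y1 * B23) * z0 by ring.
      by rewrite ey ez mul0r mul0r subrr.
    by move/eqP; rewrite mulf_eq0 (negbTE b23) => /eqP.
  move=> _.
  have : B13 * (y0 * z1 - y1 * z0) = 0.
    have -> : B13 * (y0 * z1 - y1 * z0) = (y0 * B13 + y1 * B23) * z1 - (z0 * B13 + z1 * B23) * y1 by ring.
    by rewrite ey ez mul0r mul0r subrr.
  by move/eqP; rewrite mulf_eq0 (negbTE b13) => /eqP.
have ny01 : (y0 != 0) || (y1 != 0).
  rewrite -negb_and; apply/negP => /andP [/eqP y00 /eqP y10].
  move/negP: s43; apply; rewrite E4 y00 y10 !scale0r !add0r.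
  by apply: scalemx_sub; rewrite submx_refl.
have [c [hz0 hz1]] : exists c, z0 = c * y0 /\ z1 = c * y1.
  case: (boolP (y0 == 0)) ny01 => [/eqP y00|y0n] /= y1n.
    exists (z1 / y1); split; last by rewrite divfK.
    by move: D; rewrite y00 mul0r sub0r => /eqP; rewrite oppr_eq0 mulf_eq0 (negbTE y1n) => /eqP ->; rewrite mulr0.
  exists (z0 / y0); split; first by rewrite divfK.
  apply: (mulfI y0n); move/eqP: D; rewrite subr_eq0 => /eqP ->.
  by field.
apply: (three_pts abs1 n3 n4 n5 s43 s53 s54 _ p3 p4 p5).
have -> : v5 = (z2 - c * y2) *: v3 + c *: v4.
  apply/rowP => j; rewrite E5 E4 hz0 hz1 !mxE; ring.
exact: comb_sub.
Qed.

Lemma conic_conic a1 a2 : abs_irreducible a1 -> abs_irreducible a2 ->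
  zero_set a1 != zero_set a2 -> (#|zero_set a1 :&: zero_set a2| <= 4)%N.
Proof.
move=> abs1 abs2 ne; rewrite leqNgt; apply/negP => /card_geqP [s [us ss sub]].
case: s us ss sub => [|p1 [|p2 [|p3 [|p4 [|p5 [|]]]]]] //= us _ sub.
have [v1 n1 E1] := pt_repr p1; have [v2 n2 E2] := pt_repr p2; have [v3 n3 E3] := pt_repr p3.
have [v4 n4 E4] := pt_repr p4; have [v5 n5 E5] := pt_repr p5.
have m1 : p1 \in zero_set a1 :&: zero_set a2 by apply: sub; rewrite !inE eqxx ?orbT.
have m2 : p2 \in zero_set a1 :&: zero_set a2 by apply: sub; rewrite !inE eqxx ?orbT.
have m3 : p3 \in zero_set a1 :&: zero_set a2 by apply: sub; rewrite !inE eqxx ?orbT.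
have m4 : p4 \in zero_set a1 :&: zero_set a2 by apply: sub; rewrite !inE eqxx ?orbT.
have m5 : p5 \in zero_set a1 :&: zero_set a2 by apply: sub; rewrite !inE eqxx ?orbT.
move: m1 m2 m3 m4 m5; rewrite E1 E2 E3 E4 E5 !in_setI !mem_zero //.
move: us; rewrite /= !inE !negb_or E1 E2 E3 E4 E5 !ptv_eq // andbT.
move=> /and4P [/and4P [d12 d13 d14 d15] /and3P [d23 d24 d25] /andP [d34 d35] d45].
move=> /andP [/eqP P1 /eqP q1] /andP [/eqP P2 /eqP q2] /andP [/eqP P3 /eqP q3].
move=> /andP [/eqP P4 /eqP q4] /andP [/eqP P5 /eqP q5].
have H := conic5 abs1 abs2 n1 n2 n3 n4 n5 (nsub_sym n1 n2 d12) (nsub_sym n1 n3 d13)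
  (nsub_sym n2 n3 d23) (nsub_sym n1 n4 d14) (nsub_sym n2 n4 d24) (nsub_sym n3 n4 d34)
  (nsub_sym n1 n5 d15) (nsub_sym n2 n5 d25) (nsub_sym n3 n5 d35) (nsub_sym n4 n5 d45)
  P1 P2 P3 P4 P5 q1 q2 q3 q4 q5.
move/negP: ne; apply; apply/eqP/setP => p.
have [v nv ->] := pt_repr p.
by rewrite !mem_zero // H.
Qed.

Lemma map_mx3 (L : fieldType) (f : {rmorphism F -> L}) (b0 b1 b2 : 'rV[F]_3) :
  map_mx f (mx3 b0 b1 b2) = mx3 (map_mx f b0) (map_mx f b1) (map_mx f b2).
Proof. apply/matrixP => i j; rewrite !mxE; by case: (i == i0); case: (i == i1). Qed.

Lemma sing_contra a v b1 b2 : abs_irreducible a -> indep3 v b1 b2 ->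
  qeval a v = 0 -> bil a v b1 = 0 -> bil a v b2 = 0 -> False.
Proof.
move=> abs I Qv B1 B2.
have [K [f _]] := countable_algebraic_closure F.
have U : map_mx f (mx3 v b1 b2) \in unitmx by rewrite map_unitmx; exact: indep3_unit.
set A := f (qeval a b1); set C := f (qeval a b2); set Bc := f (bil a b1 b2).
have key x : qeval (map_mx f a) (x *m map_mx f (mx3 v b1 b2)) =
    A * x 0 i1 ^+ 2 + Bc * x 0 i1 * x 0 i2 + C * x 0 i2 ^+ 2.
  rewrite map_mx3 mx3E qeval_comb3 !qeval_map !bil_map Qv B1 B2 !rmorph0 -/A -/C -/Bc; ring.
case: (eqVneq A 0) => [A0|An].
  apply: (@red_contra F K f a _ (r3 0 0 1) (r3 0 Bc C) abs U) => x.
  rewrite key A0 /dot !r3E; ring.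
have [r hr] := @solve_monicpoly K 2 (fun i => if i == 0%N then - (C / A) else - (Bc / A)) isT.
rewrite !big_ord_recl big_ord0 /= in hr.
apply: (@red_contra F K f a _ (r3 0 1 (- r)) (r3 0 A (Bc + A * r)) abs U) => x.
rewrite key.
have -> : C = - (A * r ^+ 2) - Bc * r.
  rewrite hr; field; exact: An.
rewrite /dot !r3E; ring.
Qed.

Lemma conic_big a p : abs_irreducible a -> p \in zero_set a ->
  (#|F|.+1 <= #|zero_set a|)%N.
Proof.
move=> abs; have [v nv ->] := pt_repr p; rewrite mem_zero // => /eqP Qv.
have rk1 : (\rank v < 3)%N by rewrite rank_row.
have [i nb1] := exists_out rk1; set b1 := (delta_mx 0 i : 'rV[F]_3) in nb1.
have I2 := indep2_of nv nb1.
have rk2 : (\rank (v + b1)%MS < 3)%N by rewrite rank_adds2.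
have [j nb2] := exists_out rk2; set b2 := (delta_mx 0 j : 'rV[F]_3) in nb2.
have I3 := indep3_of I2 nb2.
set l1 := bil a v b1; set l2 := bil a v b2.
have ns : ~~ ((l1 == 0) && (l2 == 0)).
  by apply/negP => /andP [/eqP h1 /eqP h2]; exact: (sing_contra abs I3 Qv h1 h2).
pose R o := r1 o *: b1 + r2 o *: b2.
pose l o := bil a v (R o).
have lE o : l o = r1 o * l1 + r2 o * l2 by rewrite /l /R bil_lin.
pose X o := l o *: R o + (- qeval a (R o)) *: v.
have Xc o : X o = (- qeval a (R o)) *: v + (l o * r1 o) *: b1 + (l o * r2 o) *: b2.
  by apply/rowP => k; rewrite /X /R !mxE; ring.
have Xnz o : l o != 0 -> X o != 0.
  move=> ln; apply/eqP; rewrite Xc => /I3 [_ h1 h2].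
  apply: (@r12_ne0 o); split.
    by move/eqP: h1; rewrite mulf_eq0 (negbTE ln) => /eqP.
  by move/eqP: h2; rewrite mulf_eq0 (negbTE ln) => /eqP.
have XQ o : qeval a (X o) = 0.
  rewrite /X qeval_comb2 bilC Qv; rewrite -/(l o); ring.
have Xv o : l o != 0 -> ptv (X o) != ptv v.
  move=> ln; rewrite ptv_eq ?Xnz //; apply/negP => /sub_rVP [c].
  rewrite Xc => E.
  have E' : (- qeval a (R o)) *: v + (l o * r1 o) *: b1 + (l o * r2 o) *: b2 =
     c *: v + 0 *: b1 + 0 *: b2 by rewrite -E !scale0r !addr0.
  have [_ h1 h2] := indep3_eq I3 E'.
  apply: (@r12_ne0 o); split.
    by move/eqP: h1; rewrite mulf_eq0 (negbTE ln) => /eqP.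
  by move/eqP: h2; rewrite mulf_eq0 (negbTE ln) => /eqP.
pose g o := if l o != 0 then ptv (X o) else ptv v.
apply: (@inj_card _ g); last first.
  by move=> o; rewrite /g; case: ifP => [ln|_]; rewrite mem_zero ?Xnz ?XQ ?Qv.
move=> o o'; rewrite /g.
case: (boolP (l o != 0)) => ln; case: (boolP (l o' != 0)) => ln' E.
- move/eqP: E; rewrite ptv_eq ?Xnz // => /sub_rVP [c].
  rewrite !Xc scalerDr scalerDr !scalerA => /(indep3_eq I3) [_ h1 h2].
  apply: (@r12_inj _ _ (c * l o' / l o)); apply: (mulfI ln).
    by rewrite h1; field.
  by rewrite h2; field.
- by move: (Xv o ln); rewrite E eqxx.
- by move: (Xv o' ln'); rewrite E eqxx.
move: ln ln'; rewrite !negbK !lE.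
move: ns; rewrite /r1 /r2.
case: o E => [k|]; case: o' => [k'|] //= _ ns /eqP h /eqP h'.
- case: (eqVneq k k') => [->//|nk]; exfalso; move/negP: ns; apply.
  have e2 : l2 = 0.
    have : (k - k') * l2 = 0.
      have -> : (k - k') * l2 = (1 * l1 + k * l2) - (1 * l1 + k' * l2) by ring.
      by rewrite h h' subrr.
    by move/eqP; rewrite mulf_eq0 subr_eq0 (negbTE nk) => /eqP.
  by move: h; rewrite e2 mulr0 addr0 mul1r => ->; rewrite eqxx.
- exfalso; move/negP: ns; apply.
  move: h'; rewrite mul0r add0r mul1r => e2.
  by move: h; rewrite e2 mulr0 addr0 mul1r => ->; rewrite eqxx.
- exfalso; move/negP: ns; apply.
  move: h; rewrite mul0r add0r mul1r => e2.
  by move: h'; rewrite e2 mulr0 addr0 mul1r => ->; rewrite eqxx.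
Qed.

End Geo.


Lemma card_bigcup_leq (I T : finType) (P : pred I) (A : I -> {set T}) :
  (#|\bigcup_(i | P i) A i| <= \sum_(i | P i) #|A i|)%N.
Proof.
elim/big_rec2: _ => [|i U n _ IH]; first by rewrite cards0.
by apply: leq_trans (leq_card_setU _ _).1 _; exact: leq_add.
Qed.

Lemma F2_cases (x : 'F_2) : x = 0 \/ x = 1.
Proof. by case: x => [[|[|//]] Hx]; [left|right]; apply/val_inj. Qed.

Lemma F2_11 : (1 + 1 : 'F_2) = 0. Proof. by apply/val_inj. Qed.

Section Comb.
Variable F : finFieldType.
Variable t : nat.
Variable Gam : 'I_t -> {set {set Point F}}.
Hypothesis bund : forall i, projective_bundle (Gam i).
Hypothesis disj : forall i j, i != j -> [disjoint Gam i & Gam j].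

Lemma q_gt1 : (1 < #|F|)%N.
Proof. by apply/card_gt1P; exists 0, 1; split => //; rewrite eq_sym oner_eq0. Qed.

Lemma conic_of C i : C \in Gam i -> exists a, abs_irreducible a /\ C = zero_set a.
Proof. by have [h _ _] := bund i; move/h. Qed.

Lemma Hcols_mem S : S \in Hcols Gam -> (exists l, S = line_pts l) \/ (exists i, S \in Gam i).
Proof.
rewrite mem_cat => /orP [/mapP [l _ ->] | /flattenP [s /mapP [i _ ->]]].
  by left; exists l.
by rewrite mem_enum => h; right; exists i.
Qed.

Lemma col_weight S : S \in Hcols Gam -> (#|F|.+1 <= #|S|)%N.
Proof.
case/Hcols_mem => [[l ->]|[i Si]]; first exact: line_card.
have [a [abs E]] := conic_of Si; rewrite E in Si *.
have [_ cG pw] := bund i.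
have : (1 < #|Gam i|)%N by rewrite cG; have := q_gt1; lia.
case/card_gt1P => [D1 [D2 [h1 h2 d]]].
have [D [hD nD]] : exists D, D \in Gam i /\ zero_set a != D.
  case: (eqVneq (zero_set a) D1) => [e|n]; last by exists D1.
  by exists D2; split => //; rewrite e.
have := pw _ _ Si hD nD => c1.
have : (0 < #|zero_set a :&: D|)%N by rewrite c1.
case/card_gt0P => p; rewrite in_setI => /andP [hp _].
exact: conic_big abs hp.
Qed.

Lemma inter4 S S' : S \in Hcols Gam -> S' \in Hcols Gam -> S != S' ->
  (#|S :&: S'| <= 4)%N.
Proof.
case/Hcols_mem => [[l ->]|[i Si]]; case/Hcols_mem => [[l' ->]|[i' Si']] ne.
- have nl : l != l' by apply: contraNneq ne => ->.
  by apply: leq_trans (line_line nl) _.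
- have [a [abs E]] := conic_of Si'; rewrite E.
  by apply: leq_trans (line_conic l abs) _.
- have [a [abs E]] := conic_of Si; rewrite E setIC.
  by apply: leq_trans (line_conic l' abs) _.
- have [a [abs E]] := conic_of Si; have [a' [abs' E']] := conic_of Si'.
  by rewrite E E'; apply: conic_conic => //; rewrite -E -E'.
Qed.

Lemma line_pts_inj : injective (@line_pts F).
Proof.
move=> l l' E; apply/eqP; apply/negPn/negP => nl.
have := line_line nl; rewrite E setIid => h.
have := line_card l'; have := q_gt1; lia.
Qed.

Lemma flat_uniq (r : seq 'I_t) : uniq r -> uniq (flatten [seq enum (Gam i) | i <- r]).
Proof.
elim: r => //= i r IH /andP [ni ur]; rewrite cat_uniq enum_uniq IH // andbT /=.
apply/hasPn => C /flattenP [s /mapP [j jr ->]]; rewrite !mem_enum => Cj.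
have nij : i != j by apply: contraNneq ni => ->.
by rewrite (disjointFl (disj nij) Cj).
Qed.

Lemma uniq_Hcols : uniq (Hcols Gam).
Proof.
rewrite /Hcols cat_uniq (map_inj_uniq line_pts_inj) enum_uniq flat_uniq ?enum_uniq // andbT /=.
apply/hasPn => C /flattenP [s /mapP [i _ ->]]; rewrite mem_enum => Ci.
apply/mapP => [[l _ E]].
have [a [abs E']] := conic_of Ci.
have := line_conic l abs; rewrite -E' E setIid => h.
have := line_card l; have := q_gt1; lia.
Qed.

Definition Sc (j : 'I_(size (Hcols Gam))) := nth set0 (Hcols Gam) j.

Lemma Sc_mem j : Sc j \in Hcols Gam.
Proof. exact: mem_nth. Qed.

Lemma Sc_neq j k : j != k -> Sc j != Sc k.
Proof. by rewrite /Sc nth_uniq ?uniq_Hcols. Qed.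

Lemma Hmx1 i j : (Hmx Gam i j == 1) = (enum_val i \in Sc j).
Proof.
rewrite mxE /Sc; case: (_ \in _) => //=.
Qed.

Lemma Hmx01 i j : Hmx Gam i j = if enum_val i \in Sc j then 1 else 0.
Proof. by rewrite mxE /Sc; case: (_ \in _). Qed.

Lemma card_rows (A : {set Point F}) :
  #|[set i : 'I_#|{: Point F}| | enum_val i \in A]| = #|A|.
Proof.
rewrite -(card_imset _ enum_val_inj).
suff -> : enum_val @: [set i : 'I_#|{: Point F}| | enum_val i \in A] = A by [].
apply/setP => x.
apply/imsetP/idP => [[i]|h]; first by rewrite inE => h ->.
by exists (enum_rank x); rewrite ?inE enum_rankK.
Qed.

Lemma col_interE j k : col_inter (Hmx Gam) j k = #|Sc j :&: Sc k|.
Proof.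
rewrite /col_inter -card_rows; apply: eq_card => i.
by rewrite !inE !Hmx1.
Qed.

End Comb.


Unset Implicit Arguments. Set Strict Implicit. Set Printing Implicit Defensive.

Theorem proposition5p3 (F : finFieldType) (t : nat)
  (Gam : 'I_t -> {set {set Point F}}) :
  (1 < t)%N ->
  (forall i, projective_bundle (Gam i)) ->
  (forall i j, i != j -> [disjoint Gam i & Gam j]) ->
  (max_col_inter (Hmx Gam) <= 4)%N /\
  (forall (c e : 'rV['F_2]_(size (Hcols Gam))),
     in_code (Hmx Gam) c ->
     (wt e <= (#|F| + 1) %/ 8)%N ->
     bitflip (Hmx Gam) (#|F| + 1) (c + e) = c).
Proof.
move=> _ bund disj.
have ci4 j k : j != k -> (col_inter (Hmx Gam) j k <= 4)%N.
  move=> jk; rewrite col_interE; apply: (inter4 bund); rewrite ?Sc_mem //.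
  exact: Sc_neq.
split.
  apply/bigmax_leqP => j _; apply/bigmax_leqP => k kj; apply: ci4; by rewrite eq_sym.
move=> c e /eqP cc we.
set H := Hmx Gam.
have Hc : H *m c^T = 0.
  by have := congr1 trmx cc; rewrite trmx_mul trmxK trmx0.
set E := [set k | e 0 k != 0].
have wE : wt e = #|E| by [].
have He0 k : k \notin E -> e 0 k = 0 by rewrite inE negbK => /eqP.
have He1 k : k \in E -> e 0 k = 1.
  by rewrite inE; case: (F2_cases (e 0 k)) => ->; rewrite ?eqxx.
have HH0 i k : (H i k == 1) = false -> H i k = 0.
  by case: (F2_cases (H i k)) => -> //; rewrite eqxx.
have sE i : (H *m (c + e)^T) i 0 = \sum_k H i k * e 0 k.
  rewrite linearD /= mulmxDr Hc add0r mxE.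
  by apply: eq_bigr => k _; rewrite [e^T _ _]mxE.
have s1 i : (H *m (c + e)^T) i 0 == 1 -> exists2 k, k \in E & H i k == 1.
  rewrite sE => h.
  case: (pickP (fun k => (k \in E) && (H i k == 1))) => [k /andP [k1 k2]|none].
    by exists k.
  move: h; rewrite big1 ?(eq_sym 0) ?oner_eq0 // => k _.
  case: (boolP (k \in E)) => kE; last by rewrite He0 // mulr0.
  by move: (none k); rewrite kE /= => /HH0 ->; rewrite mul0r.
rewrite /bitflip; apply/rowP => j; rewrite !mxE.
set u := #|[set i | _]|.
case: (boolP (j \in E)) => jE.
  set T := [set i : 'I_#|{: Point F}| | H i j == 1].
  set U := \bigcup_(k in E :\ j) [set i : 'I_#|{: Point F}| | (H i j == 1) && (H i k == 1)].
  have cT : #|T| = #|Sc j| by rewrite -card_rows; apply: eq_card => i; rewrite !inE Hmx1.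
  have wT := col_weight bund (Sc_mem j).
  have cU : (#|U| <= 4 * (#|E| - 1))%N.
    apply: leq_trans (card_bigcup_leq _ _) _.
    apply: (@leq_trans (\sum_(k in E :\ j) 4)).
      apply: leq_sum => k kE; apply: ci4.
      by move: kE; rewrite in_setD1 eq_sym => /andP [].
    by rewrite sum_nat_const (cardsD1 j E) jE /=; lia.
  have sub : T :\: U \subset [set i | (H i j == 1) && ((H *m (c + e)^T) i 0 == 1)].
    apply/subsetP => i; rewrite !inE => /andP [nU Tj]; rewrite Tj /=.
    rewrite sE (bigD1 j) //= big1 ?addr0; first by rewrite (eqP Tj) He1 // mul1r.
    move=> k kj; case: (boolP (k \in E)) => kE; last by rewrite He0 // mulr0.
    rewrite HH0 ?mul0r //; apply/negbTE; apply: contra nU => Hk.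
    by apply/bigcupP; exists k; rewrite ?in_setD1 ?kj // inE Tj Hk.
  have uT : (#|T| <= #|U| + u)%N.
    rewrite -(cardsID U T); apply: leq_add; first by apply: subset_leq_card; exact: subsetIr.
    exact: subset_leq_card sub.
  have -> : (#|F| + 1 < 2 * u)%N.
    have := leq_trans (leq_trans wT (eq_leq (esym cT))) uT.
    have : (0 < #|E|)%N by apply/card_gt0P; exists j.
    move: we; rewrite wE; lia.
  by rewrite He1 // -addrA F2_11 addr0.
have uE : (u <= 4 * #|E|)%N.
  have sub : [set i | (H i j == 1) && ((H *m (c + e)^T) i 0 == 1)] \subset
     \bigcup_(k in E) [set i : 'I_#|{: Point F}| | (H i j == 1) && (H i k == 1)].
    apply/subsetP => i; rewrite inE => /andP [Tj /s1 [k kE Hk]].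
    by apply/bigcupP; exists k; rewrite // inE Tj Hk.
  apply: leq_trans (subset_leq_card sub) _.
  apply: leq_trans (card_bigcup_leq _ _) _.
  apply: (@leq_trans (\sum_(k in E) 4)).
    apply: leq_sum => k kE; apply: ci4.
    by apply: contraNneq jE => ->.
  by rewrite sum_nat_const mulnC.
have -> : (#|F| + 1 < 2 * u)%N = false.
  by apply/negbTE; move: we; rewrite wE -leqNgt; lia.
by rewrite He0 // !addr0.
Qed.
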